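(* Let $(u_n)_{n \geq 1}$ be a virtual isometry. For $n \geq 1$ let $x_n := u_n(e_n)$, let $(f^{(n)}_k)_{1\le k\le n}$ be an orthonormal basis of $\mathbb{C}^n$ consisting of eigenvectors of $u_n$ with corresponding eigenvalues $(\lambda^{(n)}_k)_{1\le k\le n}$, let $P_n(z) := \det(z\,\mathrm{Id}_n - u_n)$, and write $x_{n+1} = \sum_{k=1}^n \mu^{(n)}_k f^{(n)}_k + \nu_n e_{n+1}$. Then for every $n \geq 1$ such that $x_{n+1} \neq e_{n+1}$, one has $\nu_n \neq 1$ and, for all $z \notin \{\lambda^{(n)}_1,\dots,\lambda^{(n)}_n\}$, $$P_{n+1}(z) = \frac{P_n(z)}{\overline{\nu_n} - 1}\left[(z - \nu_n)(\overline{\nu_n} - 1) - (z-1)\sum_{k=1}^n |\mu^{(n)}_k|^2 \frac{\lambda^{(n)}_k}{z - \lambda^{(n)}_k}\right].$$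
   Context: Let $(e_k)$ be the canonical basis of $\ell^2$; identify $\mathbb{C}^n$ with the span of $e_1,\dots,e_n$ (so $\mathbb{C}^n\subset\mathbb{C}^{n+1}$) and $U(n)$ with the unitary operators fixing every $e_k$, $k>n$. For $n\ge m\ge1$ and $u\in U(n)$, $\pi_{n,m}(u)$ is the unique $v\in U(m)$ such that the range of $u-v$ is contained in $(u-\mathrm{Id})(\mathrm{span}\{e_k:k>m\})$ (existence and uniqueness are known). A virtual isometry is a sequence $(u_n)_{n\ge1}$ with $u_n\in U(n)$ and $\pi_{n+1,n}(u_{n+1})=u_n$ for all $n\ge1$. *)

(* Defs.v *)
From HB Require Import structures.
From mathcomp Require Import all_boot all_order all_algebra.
From mathcomp Require Import reals complex.
Set Implicit Arguments. Unset Strict Implicit. Unset Printing Implicit Defensive.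
Import Order.TTheory GRing.Theory Num.Theory.
Local Open Scope ring_scope.
Local Open Scope sesquilinear_scope.

Definition Cx (R : realType) := complex.complex R.

(* Canonical embedding C^n ⊂ C^(n+1) (column vectors; e_(n+1) is the last index). *)
Definition extv {C : nzRingType} {n : nat} (x : 'cV[C]_n) : 'cV[C]_(n.+1) :=
  castmx (addn1 n, erefl 1%N) (col_mx x 0).

Definition extm {C : nzRingType} {n : nat} (u : 'M[C]_n) : 'M[C]_(n.+1) :=
  castmx (addn1 n, addn1 n) (block_mx u 0 0 1%:M).

(* e_k : the k-th canonical basis column vector of C^n (k : 'I_n, 0-based). *)
Definition evec {C : nzRingType} {n : nat} (k : 'I_n) : 'cV[C]_n := delta_mx k 0.

(* pi_{n+1,n}(w) = v (with w in U(n+1), v in U(n)), by its defining property: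
   range (w - v) ⊆ (w - Id)(span{e_k : k > n}).  Since w fixes e_k for k > n+1,
   the latter space is the line spanned by (w - Id) e_(n+1). *)
Definition proj_succ_is {C : nzRingType} {n : nat} (w : 'M[C]_(n.+1)) (v : 'M[C]_n) : Prop :=
  forall x : 'cV[C]_(n.+1), exists c : C,
    (w - extm v) *m x = c *: ((w - 1%:M) *m evec ord_max).

(* A virtual isometry: u n ∈ U(n) for all n >= 1 and pi_{n+1,n}(u (n+1)) = u n.
   (The component u 0 : 'M_0 is irrelevant.) *)
Definition virtual_isometry {R : realType} (u : forall n : nat, 'M[Cx R]_n) : Prop :=
  (forall n, (0 < n)%N -> u n \is unitarymx) /\
  (forall n, (0 < n)%N -> proj_succ_is (u n.+1) (u n)).

(* Main.v *)
Require Import Defs.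
From HB Require Import structures.
From mathcomp Require Import all_boot all_order all_algebra.
From mathcomp Require Import reals complex.
Import Order.TTheory GRing.Theory Num.Theory.
Local Open Scope ring_scope.
Local Open Scope sesquilinear_scope.

From mathcomp Require Import ring.
Section Adj.
Variable C : numClosedFieldType.
Lemma adjM m n p (A : 'M[C]_(m,n)) (B : 'M_(n,p)) : (A *m B)^t* = B^t* *m A^t*.
Proof. by rewrite trmx_mul map_mxM. Qed.
Lemma adj_col m1 m2 n (A : 'M[C]_(m1,n)) (B : 'M_(m2,n)) : (col_mx A B)^t* = row_mx (A^t*) (B^t*).
Proof. by rewrite tr_col_mx map_row_mx. Qed.
Lemma adj_row m n1 n2 (A : 'M[C]_(m,n1)) (B : 'M_(m,n2)) : (row_mx A B)^t* = col_mx (A^t*) (B^t*).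
Proof. by rewrite tr_row_mx map_col_mx. Qed.
Lemma adj_block m1 m2 n1 n2 (A : 'M[C]_(m1,n1)) (B : 'M_(m1,n2)) (D : 'M_(m2,n1)) (G : 'M_(m2,n2)) :
  (block_mx A B D G)^t* = block_mx (A^t*) (D^t*) (B^t*) (G^t*).
Proof. by rewrite tr_block_mx map_block_mx. Qed.
Lemma adj_scalar n (a : C) : (a%:M : 'M_n)^t* = (a^*)%:M.
Proof. by rewrite tr_scalar_mx map_scalar_mx. Qed.
Lemma adj0 m n : (0 : 'M[C]_(m,n))^t* = 0.
Proof. by rewrite trmx0 map_mx0. Qed.
Lemma adjB m n (A B : 'M[C]_(m,n)) : (A - B)^t* = A^t* - B^t*.
Proof. by rewrite linearB map_mxB. Qed.
Lemma adjK m n (A : 'M[C]_(m,n)) : (A^t*)^t* = A.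
Proof. exact: trmxCK. Qed.
Lemma adj_norm0 m (v : 'cV[C]_m) : v^t* *m v = 0 -> v = 0.
Proof.
move=> /matrixP /(_ 0 0); rewrite !mxE => H.
have Hs : \sum_i `|v i 0| ^+ 2 = 0.
  by rewrite -[RHS]H; apply: eq_bigr => j _; rewrite !mxE normCK mulrC.
have H2 : forall i, `|v i 0| ^+ 2 = 0.
  by move=> i; apply: (psumr_eq0P _ Hs) => // j _; rewrite exprn_ge0.
apply/matrixP => i j; rewrite (ord1 j) mxE; apply/eqP; rewrite -normr_eq0 -sqrf_eq0; exact/eqP/H2.
Qed.
End Adj.
Lemma mx_eq_col (C : nzRingType) m n (A B : 'M[C]_(m,n)) : (forall v : 'cV_n, A *m v = B *m v) -> A = B.
Proof.
move=> H; apply/matrixP => i j; move: (H (delta_mx j 0)); rewrite -!colE => /matrixP /(_ i 0).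
by rewrite !mxE.
Qed.

Ltac msimp := rewrite ?(mul0mx, mulmx0, mul1mx, mulmx1, addr0, add0r, adj0, conjC1, adj_scalar, subr0, sub0r).

Lemma main_blk (R : realType) (n : nat) (un : 'M[Cx R]_n) (W : 'M[Cx R]_(n+1))
  (F : 'M[Cx R]_n) (lam mu : 'I_n -> Cx R) (nu : Cx R) :
 W \is unitarymx ->
 (forall x : 'cV[Cx R]_(n+1), exists c : Cx R,
    (W - block_mx un 0 0 1%:M) *m x = c *: ((W - 1%:M) *m col_mx 0 1%:M)) ->
 F^t* *m F = 1%:M ->
 (forall k, un *m col k F = lam k *: col k F) ->
 W *m col_mx 0 1%:M = \sum_(k < n) mu k *: col_mx (col k F) 0 + nu *: col_mx 0 1%:M ->
 W *m col_mx 0 1%:M != col_mx 0 1%:M ->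
 nu != 1 /\ forall z : Cx R, (forall k : 'I_n, z != lam k) ->
    \det (z%:M - W) =
      \det (z%:M - un) / (nu^* - 1) *
      ((z - nu) * (nu^* - 1)
       - (z - 1) * \sum_(k < n) `|mu k| ^+ 2 * (lam k / (z - lam k))).
Proof.
move=> HWu Hp HF Heig Hx0 Hne.
set eN : 'cV[Cx R]_(n+1) := col_mx 0 1%:M.
pose V0 : 'M[Cx R]_(n+1) := block_mx un 0 0 1%:M.
set mcol : 'cV[Cx R]_n := \col_k mu k.
have Ha : \sum_(k < n) mu k *: col k F = F *m mcol.
  by apply/matrixP => i j; rewrite (ord1 j) summxE !mxE; apply: eq_bigr => k _; rewrite !mxE mulrC.
have Hsum : \sum_(k < n) mu k *: col_mx (col k F) (0 : 'cV_1) = col_mx (F *m mcol) 0.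
  rewrite -Ha; elim/big_rec2: _ => [|k A B _ ->]; first by rewrite col_mx0.
  by rewrite scale_col_mx scaler0 add_col_mx addr0.
set x := W *m eN.
have Hx : x = col_mx (F *m mcol) (nu%:M).
  by rewrite /x Hx0 Hsum /eN scale_col_mx scaler0 scalemx1 add_col_mx addr0 add0r.
have WtW : W^t* *m W = 1%:M by apply: mulmx1C; apply/unitarymxP.
have eNeN : eN^t* *m eN = 1%:M.
  by rewrite /eN adj_col mul_row_col adj0 mul0mx add0r adj_scalar conjC1 mul1mx.
have xx : x^t* *m x = 1%:M by rewrite /x adjM -mulmxA (mulmxA (W^t*)) WtW mul1mx eNeN.
have Hnu : nu != 1.
  apply/eqP => Hn1; move/eqP: Hne; apply; rewrite -/x Hx Hn1.
  suff -> : F *m mcol = 0 by [].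
  apply: adj_norm0.
  move: xx; rewrite Hx adj_col mul_row_col adj_scalar Hn1 conjC1 mul1mx.
  by move/(congr1 (fun M => M - 1%:M)); rewrite addrK subrr.
split=> // z Hz.
pose k := nu^* - 1.
have Hk : k != 0.
  by rewrite /k subr_eq0; apply: contra Hnu => /eqP h; rewrite -[nu]conjCK h conjC1.
pose y := x - eN.
have Hy : (W - 1%:M) *m eN = y by rewrite mulmxBl mul1mx.
have eNV0 : eN^t* *m V0 = eN^t*.
  by rewrite /eN /V0 adj_col adj0 adj_scalar conjC1 mul_row_block !mul0mx !mulmx0 !mul1mx !add0r.
have xeN : x^t* *m eN = (nu^*)%:M.
  by rewrite Hx adj_col /eN mul_row_col mulmx0 add0r adj_scalar mulmx1.
have xW : x^t* *m W = eN^t* by rewrite /x adjM -mulmxA WtW mulmx1.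
have HWf : k *: (W - V0) = y *m (y^t* *m V0).
  apply: mx_eq_col => v.
  have [c Hc] := Hp v.
  have Hc' : (W - V0) *m v = c *: y by rewrite -Hy; exact: Hc.
  have H1 : x^t* *m ((W - V0) *m v) = - (y^t* *m (V0 *m v)).
    by rewrite mulmxA mulmxBr xW mulmxBl /y adjB mulmxBl opprB !mulmxA eNV0.
  have H2 : x^t* *m y = (1 - nu^*)%:M.
    rewrite /y mulmxBr xx xeN.
    by apply/matrixP => i j; rewrite !ord1 !mxE eqxx /= !mulr1n.
  have H3 : y^t* *m (V0 *m v) = (c * k)%:M.
    apply: oppr_inj; rewrite -H1 Hc' -scalemxAr H2 scale_scalar_mx -raddfN.
    apply/matrixP => i j; rewrite !ord1 !mxE eqxx /= !mulr1n /k; ring.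
  by rewrite -scalemxAl Hc' -!mulmxA H3 mul_mx_scalar scalerA mulrC.
pose E : 'M[Cx R]_(n+1) := block_mx F 0 0 1%:M.
have EtE : E^t* *m E = 1%:M.
  rewrite /E adj_block !adj0 adj_scalar conjC1 mulmx_block !mul0mx !mulmx0 !mul1mx !addr0 !add0r HF.
  by rewrite -scalar_mx_block.
have EEt : E *m E^t* = 1%:M by apply: mulmx1C.
pose lamr : 'rV[Cx R]_n := \row_k lam k.
pose D := diag_mx lamr.
have uFD : un *m F = F *m D.
  apply/matrixP => i j; rewrite mul_mx_diag !mxE mulrC.
  have := congr1 (fun M : 'cV_n => M i 0) (Heig j); rewrite !mxE => <-.
  by apply: eq_bigr => l _; rewrite !mxE.
have FtuF : F^t* *m un *m F = D by rewrite -mulmxA uFD mulmxA HF mul1mx.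
have EtV0E : E^t* *m V0 *m E = block_mx D 0 0 1%:M.
  rewrite /E /V0 adj_block !adj0 adj_scalar conjC1 !mulmx_block !mul0mx !mulmx0 !mul1mx !addr0 !add0r.
  by rewrite FtuF; rewrite !(mul0mx, mulmx0, mul1mx, mulmx1, addr0, add0r).
have EtxE : E^t* *m x = col_mx mcol (nu%:M).
  by rewrite Hx /E adj_block mul_block_col; msimp; rewrite mulmxA HF mul1mx.
have EteN : E^t* *m eN = eN.
  by rewrite /eN /E adj_block mul_block_col; msimp.
pose y' := E^t* *m y.
have Hy' : y' = col_mx mcol ((nu - 1)%:M).
  rewrite /y' /y mulmxBr EtxE EteN /eN opp_col_mx add_col_mx subr0; congr col_mx.
  by apply/matrixP => i j; rewrite !ord1 !mxE eqxx /= !mulr1n.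
pose DD : 'M[Cx R]_(n+1) := block_mx D 0 0 1%:M.
have EWE : E^t* *m W *m E = DD + k^-1 *: (y' *m (y'^t* *m DD)).
  apply/eqP; rewrite addrC -subr_eq; apply/eqP.
  rewrite /DD -EtV0E -mulmxBl -mulmxBr.
  rewrite -[LHS](scale1r) -(mulVf Hk) -scalerA; congr (_ *: _).
  rewrite scalemxAl scalemxAr HWf /y' adjM adjK !mulmxA.
  by rewrite -[_ *m E *m E^t*]mulmxA EEt mulmx1.
have detE : \det (E^t*) * \det E = 1 by rewrite -det_mulmx EtE det1.
have detF : \det (F^t*) * \det F = 1 by rewrite -det_mulmx HF det1.
have L1 : E^t* *m (z%:M - W) *m E = z%:M - (DD + k^-1 *: (y' *m (y'^t* *m DD))).
  by rewrite mulmxBr mulmxBl EWE mul_mx_scalar -scalemxAl EtE scalemx1.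
have L2 : F^t* *m (z%:M - un) *m F = z%:M - D.
  by rewrite mulmxBr mulmxBl FtuF mul_mx_scalar -scalemxAl HF scalemx1.
have -> : \det (z%:M - W) = \det (E^t* *m (z%:M - W) *m E).
  by rewrite !det_mulmx mulrAC detE mul1r.
have -> : \det (z%:M - un) = \det (F^t* *m (z%:M - un) *m F).
  by rewrite !det_mulmx mulrAC detF mul1r.
rewrite L1 L2.
pose r : 'rV[Cx R]_n := k^-1 *: (mcol^t* *m D).
have Hkc : (nu - 1)^* = k by rewrite rmorphB rmorph1.
have HM : z%:M - (DD + k^-1 *: (y' *m (y'^t* *m DD))) =
   block_mx (z%:M - D - mcol *m r) (- mcol) (- ((nu - 1) *: r)) ((z - nu)%:M).
  rewrite Hy' /DD adj_col adj_scalar mul_row_block; msimp.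
  rewrite mul_col_row scale_block_mx add_block_mx (scalar_mx_block n 1 z) opp_block_mx add_block_mx.
  congr block_mx.
  - by rewrite /r -scalemxAr opprD addrA.
  - by rewrite mul_mx_scalar Hkc scalerA mulVf // scale1r sub0r add0r.
  - by rewrite mul_scalar_mx scalerA mulrC -scalerA /r sub0r add0r.
  - apply/matrixP => i j; rewrite !ord1 !mxE eqxx /= !mulr1n Hkc /k.
    rewrite big_ord1 !mxE !mulr1n [_^-1 * _]mulrC -mulrA mulfV // mulr1.
    by rewrite [1 + _]addrC subrK.
rewrite HM.
pose L : 'M[Cx R]_(n+1) := block_mx 1%:M 0 (- r) 1%:M.
have detL : \det L = 1 by rewrite /L det_lblock !det1 mulr1.
have HdL : forall M, \det M = \det (M *m L) by move=> M; rewrite det_mulmx detL mulr1.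
rewrite [LHS]HdL /L mulmx_block; msimp.
have HB2 : - ((nu - 1) *: r) + (z - nu)%:M *m - r = - ((z - 1) *: r).
  by rewrite mulmxN mul_scalar_mx -opprD -scalerDl; congr (- (_ *: _)); rewrite addrC subrKA.
rewrite HB2 mulmxN mulNmx opprK subrK.
pose Zi : 'M[Cx R]_n := diag_mx (\row_i (z - lam i)^-1).
have ZZi : (z%:M - D) *m Zi = 1%:M.
  apply/matrixP => i j; rewrite mul_mx_diag !mxE.
  case: (eqVneq i j) => [->|nij] /=; rewrite ?mulr1n ?mulr0n ?subr0 ?mul0r //.
  by rewrite mulfV // subr_eq0.
pose s : 'M[Cx R]_1 := (z - nu)%:M - (z - 1) *: (r *m Zi *m mcol).
have HF2 : block_mx (z%:M - D) (- mcol) (- ((z - 1) *: r)) (z - nu)%:M =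
   block_mx (z%:M - D) 0 (- ((z - 1) *: r)) 1%:M *m block_mx 1%:M (- (Zi *m mcol)) 0 s.
  rewrite mulmx_block; msimp; congr block_mx.
    by rewrite mulmxN mulmxA ZZi mul1mx.
  by rewrite mulmxN mulNmx opprK -scalemxAl mulmxA /s [RHS]addrC subrK.
rewrite HF2 det_mulmx det_lblock det_ublock !det1 mulr1 mul1r det_mx11.
have Hrs : (r *m Zi *m mcol) 0 0 = k^-1 * \sum_(j < n) `|mu j| ^+ 2 * (lam j / (z - lam j)).
  rewrite mxE mulr_sumr; apply: eq_bigr => j _.
  rewrite /Zi /r /D !mul_mx_diag !mxE normCK.
  by ring.
rewrite /s; move: (r *m Zi *m mcol) Hrs => P HP.
rewrite !mxE eqxx !mulr1n HP /k.
set S := \sum_(j < n) _.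
by field.
Qed.
Lemma main_gen (R : realType) (n N : nat) (e : (n + 1 = N)%N) (un : 'M[Cx R]_n) (W : 'M[Cx R]_N)
  (F : 'M[Cx R]_n) (lam mu : 'I_n -> Cx R) (nu : Cx R) :
 W \is unitarymx ->
 (forall x : 'cV[Cx R]_N, exists c : Cx R,
    (W - castmx (e, e) (block_mx un 0 0 1%:M)) *m x = c *: ((W - 1%:M) *m castmx (e, erefl 1%N) (col_mx 0 1%:M))) ->
 F^t* *m F = 1%:M ->
 (forall k, un *m col k F = lam k *: col k F) ->
 W *m castmx (e, erefl 1%N) (col_mx 0 1%:M) = \sum_(k < n) mu k *: castmx (e, erefl 1%N) (col_mx (col k F) 0) + nu *: castmx (e, erefl 1%N) (col_mx 0 1%:M) ->
 W *m castmx (e, erefl 1%N) (col_mx 0 1%:M) != castmx (e, erefl 1%N) (col_mx 0 1%:M) ->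
 nu != 1 /\ forall z : Cx R, (forall k : 'I_n, z != lam k) ->
    \det (z%:M - W) =
      \det (z%:M - un) / (nu^* - 1) *
      ((z - nu) * (nu^* - 1)
       - (z - 1) * \sum_(k < n) `|mu k| ^+ 2 * (lam k / (z - lam k))).
Proof.
case: N / e W => W; rewrite !castmx_id => HW Hp.
under eq_bigr => k _ do rewrite castmx_id.
apply: main_blk => //.
Qed.

Lemma evecE (C : nzRingType) n :
  evec (ord_max : 'I_n.+1) = castmx (addn1 n, erefl 1%N) (col_mx (0 : 'cV[C]_n) 1%:M).
Proof.
apply/matrixP => i j; rewrite castmxE !mxE.
case: splitP => k /= Hk; rewrite !mxE ?ord1 /= andbT.
  rewrite (_ : (i == ord_max) = false) //; apply/negbTE/eqP => h.
  by move: (ltn_ord k); rewrite -Hk h /= ltnn.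
rewrite (_ : i == ord_max) //; apply/eqP/val_inj; rewrite /= Hk.
by rewrite (ord1 k) addn0.
Qed.

Theorem proposition4p4 (R : realType) (u : forall n : nat, 'M[Cx R]_n)
    (Hu : virtual_isometry u) (n : nat) (Hn : (0 < n)%N)
    (F : 'M[Cx R]_n) (lam : 'I_n -> Cx R) (mu : 'I_n -> Cx R) (nu : Cx R) :
  F^t* *m F = 1%:M ->
  (forall k : 'I_n, u n *m col k F = lam k *: col k F) ->
  u n.+1 *m evec ord_max = \sum_(k < n) mu k *: extv (col k F) + nu *: evec ord_max ->
  u n.+1 *m evec ord_max != evec ord_max ->
  nu != 1 /\
  forall z : Cx R, (forall k : 'I_n, z != lam k) ->
    \det (z%:M - u n.+1) =
      \det (z%:M - u n) / (nu^* - 1) *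
      ((z - nu) * (nu^* - 1)
       - (z - 1) * \sum_(k < n) `|mu k| ^+ 2 * (lam k / (z - lam k))).
Proof.
move: Hu => [Hu1 Hu2].
have HW := Hu1 n.+1 isT.
have Hp := Hu2 n Hn.
rewrite /proj_succ_is /extm in Hp.
rewrite /extv evecE in Hp *.
exact: main_gen HW Hp.
Qed.
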